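(* Let $\pi=\langle x,y,t \mid txt^{-1}=xyx^2,\ tyt^{-1}=x^{-1}\rangle$ (the fundamental group of the figure eight knot exterior) and $F=\langle x,y\rangle\le\pi$. Then the set $\{(\operatorname{tr}\rho(x),\operatorname{tr}\rho(y),\operatorname{tr}\rho(xy)) : \rho:\pi\to SL_2(\mathbb{C}) \text{ a homomorphism}\}$ equals $X_0=\{(a,a,\tfrac{a}{a-1}) : a\in\mathbb{C},\ a\neq 1\}$.
   Context: $\operatorname{tr}$ denotes the trace of a $2\times 2$ matrix. $F$ is a free group of rank two on $x,y$. *)

(* Defs.v *)
From HB Require Import structures.
From mathcomp Require Import all_boot all_order all_algebra.
Set Implicit Arguments. Unset Strict Implicit. Unset Printing Implicit Defensive.
Import Order.TTheory GRing.Theory Num.Theory.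
Local Open Scope ring_scope.

(* A homomorphism rho : pi -> SL_2(C), where
   pi = < x, y, t | t x t^-1 = x y x^2, t y t^-1 = x^-1 >,
   is (by the universal property of a presentation) the same as a triple
   (X, Y, T) = (rho x, rho y, rho t) of matrices of determinant 1 satisfying
   the two relations. *)
Definition fig8_rep (R : numClosedFieldType) (X Y T : 'M[R]_2) : Prop :=
  [/\ \det X = 1, \det Y = 1, \det T = 1,
      T * X * T^-1 = X * Y * X ^+ 2
    & T * Y * T^-1 = X^-1].

(* Main.v *)
Require Import Defs.
From HB Require Import structures.
From mathcomp Require Import all_boot all_order all_algebra.
From mathcomp Require Import ring.
Import Order.TTheory GRing.Theory Num.Theory.
Local Open Scope ring_scope.

Section MK.
Variable R : comUnitRingType.
Definition mk (p q r s : R) : 'M[R]_2 :=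
  \matrix_(i < 2, j < 2)
    if (i : nat) == 0%N then (if (j : nat) == 0%N then p else q)
    else (if (j : nat) == 0%N then r else s).

Lemma mk_eta (M : 'M[R]_2) : M = mk (M 0 0) (M 0 1) (M 1 0) (M 1 1).
Proof.
apply/matrixP => i j; rewrite !mxE.
by case: i => [[|[|i]]] Hi; case: j => [[|[|j]]] Hj //=;
  congr (M _ _); apply/val_inj.
Qed.

Lemma mk_mul p q r s p' q' r' s' :
  mk p q r s * mk p' q' r' s' =
  mk (p * p' + q * r') (p * q' + q * s') (r * p' + s * r') (r * q' + s * s').
Proof.
apply/matrixP => i j; rewrite !mxE !big_ord_recl big_ord0 !mxE /=.
by case: i => [[|[|i]]] Hi; case: j => [[|[|j]]] Hj //=; rewrite addr0.
Qed.

Lemma mk_add p q r s p' q' r' s' :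
  mk p q r s + mk p' q' r' s' = mk (p+p') (q+q') (r+r') (s+s').
Proof.
apply/matrixP => i j; rewrite !mxE.
by case: i => [[|[|i]]] Hi; case: j => [[|[|j]]] Hj.
Qed.

Lemma mk_scale k p q r s : k *: mk p q r s = mk (k * p) (k * q) (k * r) (k * s).
Proof.
apply/matrixP => i j; rewrite !mxE.
by case: i => [[|[|i]]] Hi; case: j => [[|[|j]]] Hj.
Qed.

Lemma mk_scalar k : k%:M = mk k 0 0 k.
Proof.
apply/matrixP => i j; rewrite !mxE.
by case: i => [[|[|i]]] Hi; case: j => [[|[|j]]] Hj.
Qed.

Lemma mk_one : (1 : 'M[R]_2) = mk 1 0 0 1.
Proof. by rewrite -mk_scalar. Qed.

Lemma det_mk p q r s : \det (mk p q r s) = p * s - q * r.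
Proof.
rewrite (expand_det_row _ 0) !big_ord_recl big_ord0 /cofactor !det_mx11 !mxE /=.
rewrite /bump /= expr0 expr1 addr0 mul1r mulN1r mulrN. by [].
Qed.

Lemma tr_mk p q r s : \tr (mk p q r s) = p + s.
Proof.
by rewrite /mxtrace !big_ord_recl big_ord0 !mxE /= addr0.
Qed.

Lemma mk_inj p q r s p' q' r' s' :
  p = p' -> q = q' -> r = r' -> s = s' -> mk p q r s = mk p' q' r' s'.
Proof. by move=> -> -> -> ->. Qed.
End MK.
Arguments mk {R}.
Lemma mk_opp (R : comUnitRingType) (p q r s : R) : - mk p q r s = mk (-p) (-q) (-r) (-s).
Proof.
apply/matrixP => i j; rewrite !mxE.
by case: i => [[|[|i]]] Hi; case: j => [[|[|j]]] Hj.
Qed.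
Lemma inv_mk (R : comUnitRingType) (M : 'M[R]_2) :
  \det M = 1 -> M * (\tr M *: 1 - M) = 1.
Proof.
rewrite [M]mk_eta mk_one mk_scale tr_mk det_mk.
move: (M 0 0) (M 0 1) (M 1 0) (M 1 1) => p q r s.
rewrite mk_opp mk_add mk_mul => d.
by apply: mk_inj; rewrite ?(mulr1, mulr0) -?d; ring.
Qed.
Section D1.
Variable R : numClosedFieldType.

Lemma trconj (T M : 'M[R]_2) : T \is a GRing.unit -> \tr (T * M * T^-1) = \tr M.
Proof.
move=> uT; have := mxtrace_mulC T (M * T^-1).
by rewrite !mulmxE mulrVK // mulrA.
Qed.

Lemma dir1 (X Y T : 'M[R]_2) : fig8_rep X Y T ->
  \tr X != 1 /\ \tr Y = \tr X /\ \tr (X * Y) = \tr X / (\tr X - 1).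
Proof.
case=> dX dY dT r1 r2.
have uT : T \is a GRing.unit by rewrite unitmxE dT unitr1.
have uX : X \is a GRing.unit by rewrite unitmxE dX unitr1.
have F1 : \tr Y = \tr (X^-1) by rewrite -r2 trconj.
have F2 : \tr (X * Y) = \tr (X * Y * X).
  rewrite -(@trconj T (X * Y) uT).
  have -> : T * (X * Y) * T^-1 = (T * X * T^-1) * (T * Y * T^-1).
    by rewrite !mulrA mulrVK.
  by rewrite r1 r2 expr2 !mulrA mulrK.
have XI := @inv_mk _ X dX.
have Xi : X^-1 = \tr X *: 1 - X.
  by rewrite -[RHS](mulKr uX) XI mulr1.
move: F1 F2; rewrite Xi; move: dX.
rewrite [X]mk_eta [Y]mk_eta.
move: (X 0 0) (X 0 1) (X 1 0) (X 1 1) (Y 0 0) (Y 0 1) (Y 1 0) (Y 1 1) => x1 x2 x3 x4 y1 y2 y3 y4.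
rewrite mk_one !(mk_scale, mk_opp, mk_add, mk_mul, tr_mk, det_mk) => dX F1 F2.
have e1 : y1 + y4 = x1 + x4 by rewrite F1; ring.
set c := x1 * y1 + x2 * y3 + (x3 * y2 + x4 * y4).
set a := x1 + x4.
have key : c = a * c - (x1 * x4 - x2 * x3) * (y1 + y4).
  by rewrite {1}/c F2 /c /a; ring.
rewrite dX mul1r e1 -/a in key.
have na : a != 1.
  apply/eqP => h; move: key; rewrite h mul1r => /eqP.
  by rewrite -subr_eq0 opprB addrC subrK oner_eq0.
have na' : a - 1 != 0 by rewrite subr_eq0.
split => //; split => //.
apply: (mulIf na'); rewrite mulfVK //.
by rewrite mulrBr mulr1 {2}key; ring.
Qed.
End D1.
Section D2.
Variable R : numClosedFieldType.

Lemma unit_det1 (M : 'M[R]_2) : \det M = 1 -> M \is a GRing.unit.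
Proof. by move=> d; rewrite unitmxE d unitr1. Qed.

Lemma conj_of (T X P : 'M[R]_2) : T \is a GRing.unit -> T * X = P * T ->
  T * X * T^-1 = P.
Proof. by move=> uT ->; rewrite mulrK. Qed.

Lemma inv_of (X Q : 'M[R]_2) : X \is a GRing.unit -> X * Q = 1 -> X^-1 = Q.
Proof. by move=> uX XQ; rewrite -[RHS](mulKr uX) XQ mulr1. Qed.

Lemma two_neq0 : (2 : R) != 0.
Proof. by rewrite pnatr_eq0. Qed.

Lemma case_gen (s : R) : s != 0 -> s ^+ 2 + 1 != 0 ->
  s ^+ 4 + 5 * s ^+ 2 + 5 != 0 ->
  exists X Y T : 'M[R]_2, fig8_rep X Y T /\
   \tr X = (s ^+ 2 + 2) / (s ^+ 2 + 1) /\ \tr Y = (s ^+ 2 + 2) / (s ^+ 2 + 1)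
   /\ \tr (X * Y) = s ^+ 2 + 2.
Proof.
move=> s0 s1 s2.
set a := (s ^+ 2 + 2) / (s ^+ 2 + 1).
pose m1 := -1 + 2 * s - s ^+ 2 + 3 * s ^+ 3 + s ^+ 5.
pose m2 := 1 + s + 2 * s ^+ 2 + s ^+ 3 + s ^+ 4.
pose m3 := -1 + s ^+ 2 + s ^+ 4.
pose m4 := 1 + 3 * s + s ^+ 2 + 2 * s ^+ 3.
have dM : m1 * m4 - m2 * m3 = s ^+ 2 * (s ^+ 2 + 1) * (s ^+ 4 + 5 * s ^+ 2 + 5).
  by rewrite /m1 /m2 /m3 /m4; ring.
set r := sqrtC (m1 * m4 - m2 * m3).
have r2 : r ^+ 2 = m1 * m4 - m2 * m3 by rewrite sqrtCK.
have r0 : r != 0.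
  apply/eqP => h; move: r2; rewrite h expr0n /= dM => /esym/eqP.
  by rewrite !mulf_eq0 (negbTE s1) (negbTE s2) (negbTE s0).
pose X := mk a (-1) 1 0.
pose Y := mk s 1 (s * (a - s) - 1) (a - s).
pose T := r^-1 *: mk m1 m2 m3 m4.
have dX : \det X = 1 by rewrite det_mk; ring.
have dY : \det Y = 1 by rewrite det_mk; ring.
have dT : \det T = 1.
  rewrite /T mk_scale det_mk.
  apply: (mulfI r0); apply: (mulfI r0); rewrite mulr1 -expr2 r2 -/r.
  by field.
have uT := @unit_det1 _ dT.
have uX := @unit_det1 _ dX.
exists X, Y, T; split; last first.
  rewrite /X /Y mk_mul !tr_mk; split; first by rewrite addr0.
  split; first by rewrite addrC subrK.
  rewrite /a; field; rewrite ?s1 //.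
have Xi : X^-1 = mk 0 1 (-1) a.
  apply: inv_of => //; rewrite /X mk_mul mk_one.
  by apply: mk_inj; ring.
split => //.
  apply: conj_of => //.
  rewrite /T /X /Y expr2 !(mk_scale, mk_mul).
  apply: mk_inj; rewrite /a /m1 /m2 /m3 /m4; field. all: try by rewrite ?(s0, s1, s2, r0).
rewrite Xi; apply: conj_of => //.
rewrite /T /X /Y !(mk_scale, mk_mul).
apply: mk_inj; rewrite /a /m1 /m2 /m3 /m4; field. all: try by rewrite ?(s0, s1, s2, r0).
Qed.
End D2.
Section D3.
Variable R : numClosedFieldType.

Lemma case_five (a : R) : a ^+ 2 + a - 1 = 0 ->
  exists X Y T : 'M[R]_2, fig8_rep X Y T /\
   \tr X = a /\ \tr Y = a /\ \tr (X * Y) = a / (a - 1).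
Proof.
move=> h2.
have n2 := two_neq0 R.
set d := sqrtC (a ^+ 2 - 4).
have d2 : d ^+ 2 = a ^+ 2 - 4 by rewrite sqrtCK.
set al := (a + d) / 2.
set be := a - al.
have hq : al ^+ 2 - a * al + 1 = 0.
  have -> : al ^+ 2 - a * al + 1 = (d ^+ 2 - (a ^+ 2 - 4)) / 4.
    by rewrite /al; field.
  by rewrite d2 subrr mul0r.
have hab : al * be = 1.
  apply/eqP; rewrite -subr_eq0; apply/eqP.
  transitivity (- (al ^+ 2 - a * al + 1)); first by rewrite /be; ring.
  by rewrite hq oppr0.
have al4 : al ^+ 4 = be.
  apply/eqP; rewrite -subr_eq0; apply/eqP.
  transitivity ((al ^+ 2 - a * al + 1) * (al ^+ 2 + a * al + a ^+ 2 - 1)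
     + (a ^+ 2 + a - 1) * ((a - 1) * al - 1)); first by rewrite /be; ring.
  by rewrite hq h2 !mul0r addr0.
have be4 : be ^+ 4 = al.
  apply/eqP; rewrite -subr_eq0; apply/eqP.
  transitivity ((al ^+ 2 - a * al + 1) * (be ^+ 2 + a * be + a ^+ 2 - 1)
     + (a ^+ 2 + a - 1) * ((a - 1) * be - 1)); first by rewrite /be; ring.
  by rewrite hq h2 !mul0r addr0.
have na' : a - 1 != 0.
  apply/eqP => e; move: h2; have -> : a = 1 by apply/eqP; rewrite -subr_eq0 e.
  by move/eqP; rewrite expr1n addrK oner_eq0.
pose X := mk al 0 0 be.
pose T := mk 0 1 (-1) (0 : R).
have dX : \det X = 1 by rewrite det_mk mulr0 subr0.
have dT : \det T = 1 by rewrite det_mk; ring.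
have uT := @unit_det1 _ _ dT.
have uX := @unit_det1 _ _ dX.
have Xi : X^-1 = mk be 0 0 al.
  apply: inv_of => //; rewrite /X mk_mul mk_one.
  by apply: mk_inj; first [ring | rewrite -hab; ring].
have PX : X * X * X ^+ 2 = mk (al ^+ 4) 0 0 (be ^+ 4).
  by rewrite /X expr2 !mk_mul; apply: mk_inj; ring.
exists X, X, T; split.
  split => //.
    apply: conj_of => //; rewrite PX al4 be4 /T /X !mk_mul.
    by apply: mk_inj; ring.
  rewrite Xi; apply: conj_of => //; rewrite /T /X !mk_mul.
  by apply: mk_inj; ring.
have trX : \tr X = a by rewrite tr_mk /be; ring.
split => //; split => //.
rewrite /X mk_mul tr_mk.
transitivity (a ^+ 2 - 2 * (al * be)); first by rewrite /be; ring.
rewrite hab mulr1.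
apply: (mulIf na'); rewrite mulfVK //.
apply/eqP; rewrite -subr_eq0; apply/eqP.
transitivity ((a ^+ 2 + a - 1) * (a - 2)); first by ring.
by rewrite h2 mul0r.
Qed.
End D3.
Theorem lemma6p2 (R : numClosedFieldType) (a b c : R) :
  (exists X Y T : 'M[R]_2,
      fig8_rep X Y T /\ (a, b, c) = (\tr X, \tr Y, \tr (X * Y)))
  <->
  (exists a0 : R, a0 != 1 /\ (a, b, c) = (a0, a0, a0 / (a0 - 1))).
Proof.
split.
  move=> [X [Y [T [H E]]]]; case: (@dir1 _ _ _ _ H) => n [e1 e2].
  by exists (\tr X); split => //; rewrite E e1 e2.
move=> [a0 [n0 ->]].
have na' : a0 - 1 != 0 by rewrite subr_eq0.
have [e2|ne2] := eqVneq a0 2.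
  exists 1, 1, 1; split.
    by split; rewrite ?det1 ?invr1 ?expr1n ?mulr1 ?mul1r.
  rewrite e2 mulr1 mxtrace1.
  have -> : (2 : R) / (2 - 1) = 2 by rewrite addrK divr1.
  by [].
have [h5|nh5] := eqVneq (a0 ^+ 2 + a0 - 1) 0.
  have [X [Y [T [H [t1 [t2 t3]]]]]] := @case_five _ _ h5.
  by exists X, Y, T; split => //; rewrite t1 t2 t3.
set s := sqrtC ((2 - a0) / (a0 - 1)).
have s2 : s ^+ 2 = (2 - a0) / (a0 - 1) by rewrite sqrtCK.
have s4 : s ^+ 4 = (s ^+ 2) ^+ 2 by rewrite -exprM.
have s0 : s != 0.
  apply/eqP => e; move: s2; rewrite e expr0n /= => /esym/eqP.
  rewrite mulf_eq0 invr_eq0 (negbTE na') orbF subr_eq0 => /eqP e'.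
  by move: ne2; rewrite e' eqxx.
have s1 : s ^+ 2 + 1 != 0.
  have -> : s ^+ 2 + 1 = (a0 - 1)^-1 by rewrite s2; field.
  by rewrite invr_eq0.
have s5 : s ^+ 4 + 5 * s ^+ 2 + 5 != 0.
  have -> : s ^+ 4 + 5 * s ^+ 2 + 5 = (a0 ^+ 2 + a0 - 1) / (a0 - 1) ^+ 2.
    by rewrite s4 s2; field.
  by rewrite mulf_eq0 invr_eq0 expf_eq0 (negbTE na') (negbTE nh5) andbF.
have [X [Y [T [H [t1 [t2 t3]]]]]] := @case_gen _ _ s0 s1 s5.
exists X, Y, T; split => //.
have ea : (s ^+ 2 + 2) / (s ^+ 2 + 1) = a0.
  rewrite s2; field; rewrite na' /=.
  have -> : 2 - a0 + (a0 - 1) = 1 by ring.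
  by rewrite oner_eq0.
have ec : s ^+ 2 + 2 = a0 / (a0 - 1).
  by rewrite s2; field; rewrite ?na'.
by rewrite t1 t2 t3 ea ec.
Qed.
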